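(* Fix $a,b\in(0,1)$ and $n\in\mathbb{N}\cup\{\infty\}$. Consider the spread process $\{f_t\}$ with parameters $(\mathcal{P}_n,v_0,\mathcal{P}_n,a,b)$ and let $i_t$ be the index of the truth frontier after round $t$. Then for every $t\ge 1$ the random variable $i_t$ stochastically dominates $\min\{\mathrm{Bin}(t-1,b),\,n\}$, i.e. $\Pr[i_t\ge x]\ge \Pr[\min\{\mathrm{Bin}(t-1,b),n\}\ge x]$ for all real $x$. In particular, there exist constants $K,c_1,c_2,c_3>0$ depending only on $a,b$ such that for all $t\ge1$, $$\Pr\big[i_t\ \ge\ \min\{bt-Kt^{1-c_3},\,n\}\big]\ \ge\ 1-e^{-c_1t^{c_2}}.$$
   Context: Spread process. Fix $a,b\in[0,1]$. Let $G=(V,E)$ be a connected, locally finite, undirected graph (finite or countably infinite), $r\in V$ a root, and $T$ a breadth-first-search (BFS) spanning tree of $G$ rooted at $r$ (i.e. $d_T(r,v)=d_G(r,v)$ for all $v$). Orient $T$ away from $r$; for $v\ne r$ let $p(v)$ be its parent in $T$. The spread process with parameters $(G,r,T,a,b)$ is the random sequence of maps $f_t:V\to\{+1,-1,\bot\}$, $t\in\mathbb{N}$, defined by: $f_t(r)=+1$ for all $t$; $f_0(v)=\bot$ for $v\neq r$; for $t\ge1$ and each $v\ne r$, independently of everything else: if $f_{t-1}(v)=\bot\ne f_{t-1}(p(v))$ then $f_t(v)=f_{t-1}(p(v))$ with probability $1-a$ and $f_t(v)=-f_{t-1}(p(v))$ with probability $a$; if $f_{t-1}(v)\ne\bot$ then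 $f_t(v)=f_{t-1}(p(v))$ with probability $b$ and $f_t(v)=f_{t-1}(v)$ with probability $1-b$; if $f_{t-1}(v)=f_{t-1}(p(v))=\bot$ then $f_t(v)=\bot$. Path. For $n\in\mathbb{N}\cup\{\infty\}$, $\mathcal{P}_n$ is the path with vertices $v_0,v_1,\dots,v_n$ (infinitely many if $n=\infty$), rooted at $v_0$, with $p(v_i)=v_{i-1}$; it is its own BFS tree, and the process on it has parameters $(\mathcal{P}_n,v_0,\mathcal{P}_n,a,b)$. Truth frontier on the path. After round $t$, the truth frontier is the single node $v_{i_t}$ where $i_t=\max\{i: 0\le i\le n,\ f_t(v_0)=f_t(v_1)=\dots=f_t(v_i)=+1\}$. *)

(* Defs.v *)
From HB Require Import structures.
From mathcomp Require Import all_boot all_order all_algebra.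
From mathcomp Require Import reals sequences exp.
Set Implicit Arguments. Unset Strict Implicit. Unset Printing Implicit Defensive.
Import Order.TTheory GRing.Theory Num.Theory.
Local Open Scope ring_scope.

(* Opinions: None = bot, Some true = +1, Some false = -1. *)
Notation opinion := (option bool).

(* Path length n in N ∪ {∞}: Some m = finite path v_0..v_m, None = infinite. *)
Notation natinf := (option nat).

Section Spread.
Variable R : realType.
Variables (a b : R).

(* Probability that a (non-root) vertex with old parent opinion [p] and old own
   opinion [s] takes new opinion [x] in one round. *)
Definition vertex_step (p s x : opinion) : R :=
  match s with
  | None =>
      match p with
      | None => (x == None)%:R
      | Some sp => (1 - a) * (x == Some sp)%:R + a * (x == Some (~~ sp))%:R
      end
  | Some _ => b * (x == p)%:R + (1 - b) * (x == s)%:R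
  end.

(* Configurations on the finite path v_0, ..., v_N (vertex i has parent i-1). *)
Definition config (N : nat) := {ffun 'I_N.+1 -> opinion}.

Definition init_config (N : nat) : config N :=
  [ffun i : 'I_N.+1 => if val i == 0%N then Some true else None].

Definition step_prob (N : nat) (g h : config N) : R :=
  (h ord0 == Some true)%:R *
  \prod_(i : 'I_N.+1 | val i != 0%N) vertex_step (g (inord (val i).-1)) (g i) (h i).

Fixpoint spread_dist (N : nat) (t : nat) : config N -> R :=
  match t with
  | 0 => fun h => (h == init_config N)%:R
  | t'.+1 => fun h => \sum_(g : config N) @spread_dist N t' g * step_prob g h
  end.

Definition frontier (N : nat) (h : config N) : nat :=
  \max_(i : 'I_N.+1 | [forall j : 'I_N.+1, (j <= i)%N ==> (h j == Some true)]) val i.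

(* The vertices reached by time t: for the infinite path, the marginal of the
   process on v_0..v_(t+1) is the process on P_(t+1), and v_(t+1) is still bot
   at time t, so the frontier after round t is determined there. *)
Definition trunc (n : natinf) (t : nat) : nat :=
  match n with Some m => m | None => t.+1 end.

Definition prob_frontier_ge (n : natinf) (t : nat) (x : R) : R :=
  \sum_(h : config (trunc n t) | x <= (frontier h)%:R) @spread_dist (trunc n t) t h.

Definition minninf (k : nat) (n : natinf) : nat :=
  match n with Some m => minn k m | None => k end.

Definition minrinf (y : R) (n : natinf) : R :=
  match n with Some m => Num.min y m%:R | None => y end.

Definition prob_minbin_ge (m : nat) (n : natinf) (x : R) : R :=
  \sum_(k < m.+1 | x <= (minninf k n)%:R)
     'C(m, k)%:R * b ^+ k * (1 - b) ^+ (m - k).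

End Spread.

(* Main.v *)
Require Import Defs.
From HB Require Import structures.
From mathcomp Require Import all_boot all_order all_algebra.
From mathcomp Require Import reals sequences exp.
From mathcomp Require Import ring lra zify.
Import Order.TTheory GRing.Theory Num.Theory.
Local Open Scope ring_scope.
Set Implicit Arguments. Unset Strict Implicit. Unset Printing Implicit Defensive.

Section S.
Variable R : realType.
Variables a b : R.
Hypothesis Ha : 0 <= a <= 1.
Hypothesis Hb : 0 <= b <= 1.

Lemma sum_opt (f : option bool -> R) :
  \sum_x f x = f None + f (Some true) + f (Some false).
Proof.
rewrite (bigD1 None) //= (bigD1 (Some true)) //= (bigD1 (Some false)) //=.
by rewrite big1 ?addr0 ?addrA // => -[[]|] //.
Qed.

Lemma vs_ge0 p s x : 0 <= vertex_step a b p s x.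
Proof.
case/andP: Ha => a0 a1; case/andP: Hb => b0 b1.
have a1' : 0 <= 1 - a by rewrite subr_ge0.
have b1' : 0 <= 1 - b by rewrite subr_ge0.
by case: s => [s|]; case: p => [p|] /=; rewrite ?addr_ge0 ?mulr_ge0 ?ler0n.
Qed.

Lemma vs_sum p s : \sum_x vertex_step a b p s x = 1.
Proof.
rewrite sum_opt.
case: s => [[]|]; case: p => [[]|] /=; rewrite ?eqxx /= ?mulr1 ?mulr0 ?addr0 ?add0r; try lra.

Qed.

Definition W N (g : config N) (i : 'I_N.+1) (x : opinion) : R :=
  if val i == 0%N then (x == Some true)%:R
  else vertex_step a b (g (inord (val i).-1)) (g i) x.

Lemma stepE N (g h : config N) : step_prob a b g h = \prod_i W g i (h i).
Proof.
rewrite (bigD1 ord0) //= /W /=; congr (_ * _).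
apply: eq_big => [i|i Hi]; first by rewrite -val_eqE.
by rewrite ifF //; apply/negbTE.
Qed.

Lemma prod_sum N (F : 'I_N.+1 -> opinion -> R) :
  \sum_(h : config N) \prod_i F i (h i) = \prod_i \sum_x F i x.
Proof. by rewrite bigA_distr_bigA. Qed.

Lemma W_ge0 N (g : config N) i x : 0 <= W g i x.
Proof. rewrite /W; case: ifP => _; [exact: ler0n | exact: vs_ge0]. Qed.

Lemma W_sum N (g : config N) i : \sum_x W g i x = 1.
Proof.
rewrite /W; case: (val i == 0%N); last exact: vs_sum.
by rewrite sum_opt /= addr0 add0r.
Qed.

Lemma step_ge0 N (g h : config N) : 0 <= step_prob a b g h.
Proof. by rewrite stepE; apply: prodr_ge0 => i _; apply: W_ge0. Qed.

Lemma step_sum N (g : config N) : \sum_h step_prob a b g h = 1.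
Proof.
under eq_bigr do rewrite stepE.
by rewrite prod_sum big1 // => i _; apply: W_sum.
Qed.

Lemma dist_ge0 N t (h : config N) : 0 <= spread_dist a b t h.
Proof.
elim: t h => [|t IH] h /=; first exact: ler0n.
by apply: sumr_ge0 => g _; apply: mulr_ge0 => //; apply: step_ge0.
Qed.

Lemma dist_sum N t : \sum_(h : config N) spread_dist a b t h = 1.
Proof.
elim: t => [|t IH] /=.
  by rewrite (bigD1 (init_config N)) //= eqxx big1 ?addr0 // => h /negbTE ->.
rewrite exchange_big /= -[RHS]IH; apply: eq_bigr => g _.
by rewrite -mulr_sumr step_sum mulr1.
Qed.


Lemma Wnz N (g h : config N) i : step_prob a b g h != 0 -> W g i (h i) != 0.
Proof.
move=> Hst; apply: contra Hst => /eqP H.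
by rewrite stepE (bigD1 i) //= H mul0r.
Qed.

Lemma reach N t (h : config N) : spread_dist a b t h != 0 ->
  h ord0 = Some true /\ forall i : 'I_N.+1, (val i <= t)%N -> h i != None.
Proof.
elim: t h => [|t IH] h /=.
  move=> Hd; have /eqP -> : h == init_config N.
    by move: Hd; case: (h == _); rewrite ?eqxx.
  split; first by rewrite ffunE.
  move=> i Hi; rewrite ffunE; suff -> : (val i == 0%N) by []; by rewrite -leqn0.
move=> Hd.
case: (pickP (fun g => spread_dist a b t g * step_prob a b g h != 0)) => [g Hg|H0]; last first.
  by move: Hd; rewrite big1 ?eqxx // => g _; move: (H0 g) => /negbFE/eqP.
move: Hg; rewrite mulf_eq0 negb_or => /andP[/IH [Hg0 Hgi] Hst].
have H0 : h ord0 = Some true.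
  by move: (Wnz ord0 Hst); rewrite /W /=; case: (h ord0 =P Some true) => // _; rewrite eqxx.
split => // i Hi.
case: (posnP (val i)) => [Ei|Ei].
  by rewrite (_ : i = ord0) ?H0 //; apply: val_inj.
move: (Wnz i Hst); rewrite /W ifF; last by rewrite eqn0Ngt Ei.
have : g (inord (val i).-1) != None.
  apply: Hgi; rewrite /= inordK; first by rewrite -ltnS prednK.
  by rewrite (leq_ltn_trans (leq_pred _)) // ltn_ord.
case: (g (inord _)) => [p|] // _.
case: (h i) => [x|] //.
by case: (g i) => [s|] /=; rewrite ?mulr0 ?addr0 ?eqxx.
Qed.

Definition Pf N (h : config N) (i : 'I_N.+1) :=
  [forall j : 'I_N.+1, (j <= i)%N ==> (h j == Some true)].

Lemma fr_ge N (h : config N) m : (m <= N)%N ->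
  (forall i : 'I_N.+1, (val i <= m)%N -> h i = Some true) -> (m <= frontier h)%N.
Proof.
move=> HmN Hh.
have Hm : (m < N.+1)%N by [].
rewrite /frontier.
have -> : m = val (inord m : 'I_N.+1) by rewrite /= inordK.
apply: leq_bigmax_cond.
apply/forallP => j; apply/implyP => Hj; apply/eqP/Hh.
by rewrite inordK in Hj.
Qed.

Lemma fr_le N (h : config N) : h ord0 = Some true ->
  forall i : 'I_N.+1, (val i <= frontier h)%N -> h i = Some true.
Proof.
move=> H0.
have P0 : Pf h ord0.
  apply/forallP => j; apply/implyP; rewrite leqn0 => /eqP Ej.
  by rewrite (_ : j = ord0) ?H0 //; apply: val_inj.
rewrite /frontier (bigop.bigmax_eq_arg _ P0).
case: arg_maxnP => // i0 /forallP Pi0 _ i Hi.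
by move: (Pi0 i) => /implyP /(_ Hi) /eqP.
Qed.

Lemma fr_next N (h : config N) : h ord0 = Some true ->
  forall i : 'I_N.+1, val i = (frontier h).+1 -> h i != Some true.
Proof.
move=> H0 i Hi; apply/negP => /eqP Hhi.
have : (val i <= frontier h)%N.
  apply: fr_ge; first by rewrite -ltnS ltn_ord.
  move=> j Hj; case: (ltngtP (val j) (val i)) Hj => // [Hlt|Heq] _.
    by apply: fr_le => //; rewrite -ltnS -Hi.
  by have -> : j = i by apply: val_inj.
by rewrite Hi ltnn.
Qed.


Lemma LB N (g : config N) m : (m <= N)%N ->
  \prod_(i : 'I_N.+1 | (val i <= m)%N) W g i (Some true) <=
  \sum_h step_prob a b g h * (m <= frontier h)%:R.
Proof.
move=> HmN.
pose c (h : config N) := \prod_i (if (val i <= m)%N then (h i == Some true)%:R else 1 : R).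
apply: (@le_trans _ _ (\sum_h step_prob a b g h * c h)).
  have -> : \sum_h step_prob a b g h * c h =
      \sum_(h : config N) \prod_i (W g i (h i) * (if (val i <= m)%N then (h i == Some true)%:R else 1)).
    by apply: eq_bigr => h _; rewrite stepE /c -big_split.
  rewrite (prod_sum (fun i x => W g i x * (if (val i <= m)%N then (x == Some true)%:R else 1))).
  rewrite big_mkcond /= le_eqVlt; apply/orP; left; apply/eqP; symmetry; apply: eq_bigr => i _.
  case: ifP => _; last by under eq_bigr do rewrite mulr1; rewrite W_sum.
  by rewrite sum_opt /= !mulr0 !mulr1 addr0 add0r.
apply: ler_sum => h _; apply: ler_wpM2l; first exact: step_ge0.
case Hm: (m <= frontier h)%N.
  apply: prodr_ile1 => i _; case: ifP => _; last by rewrite ler01 lexx.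
  by case: (_ == _) => /=; rewrite ?ler01 ?lexx.
have [i Hi Hhi] : exists2 i : 'I_N.+1, (val i <= m)%N & h i != Some true.
  apply/exists_inP; apply: contraFT Hm => /exists_inPn Hall.
  by apply: fr_ge => // i Hi; apply/eqP; move: (Hall i Hi); rewrite negbK.
by rewrite /c (bigD1 i) //= Hi (negbTE Hhi) mul0r.
Qed.


Lemma W_one N (g : config N) i : g ord0 = Some true ->
  (val i <= frontier g)%N -> W g i (Some true) = 1.
Proof.
move=> H0 Hi; rewrite /W; case: ifP => [_|/negbT Hi0].
  by rewrite eqxx.
have Hp : g (inord (val i).-1) = Some true.
  apply: fr_le => //; rewrite /= inordK.
    exact: leq_trans (leq_pred _) Hi.
  exact: leq_ltn_trans (leq_pred _) (ltn_ord i).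
by rewrite Hp fr_le //= !mulr1 addrC subrK.

Qed.


Lemma true1 : (true%:R : R) = 1. Proof. exact: mulr1n. Qed.
Lemma false0 : (false%:R : R) = 0. Proof. exact: mulr0n. Qed.
Lemma natbT (c : bool) : c -> (c%:R : R) = 1. Proof. by move=> ->; exact: true1. Qed.
Lemma natbF (c : bool) : ~~ c -> (c%:R : R) = 0. Proof. by move=> /negbTE ->; exact: false0. Qed.

Lemma key N t (g : config N) k : spread_dist a b t g != 0 ->
  (1 <= k)%N -> (k <= t)%N -> (k <= N)%N ->
  (1 - b) * (k <= frontier g)%:R + b * (k.-1 <= frontier g)%:R <=
  \sum_h step_prob a b g h * (k <= frontier h)%:R.
Proof.
move=> /reach [H0 Hnn] Hk1 Hkt HkN.
apply: (le_trans _ (LB g HkN)).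
case: (ltngtP k (frontier g)) => [Hlt|Hgt|Heq].
- rewrite (leq_trans (leq_pred _) (ltnW Hlt)) true1 !mulr1 subrK.
  rewrite big1 // => i Hi; apply: W_one => //.
  exact: leq_trans Hi (ltnW Hlt).
- case: (ltngtP (frontier g).+1 k) => [Hlt2|Hgt2|Heq2].
  + have -> : (k.-1 <= frontier g)%N = false by apply/negbTE; lia.
    rewrite false0 !mulr0 addr0.
    by apply: prodr_ge0 => i _; apply: W_ge0.
  + by move: Hgt2; rewrite ltnS leqNgt Hgt.
  + have -> : (k.-1 <= frontier g)%N = true by lia.
    rewrite false0 true1 mulr0 add0r mulr1.
    have Hk : (k < N.+1)%N by [].
    rewrite (bigD1 (inord k)) /=; last by rewrite /= inordK.
    rewrite big1 ?mulr1; last first.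
      move=> i /andP[Hi Hne]; apply: W_one => //.
      rewrite -ltnS Heq2 ltn_neqAle Hi andbT.
      by apply: contra Hne => /eqP E; apply/eqP/val_inj; rewrite /= inordK // -E.
    have Hn : g (inord k) != Some true by apply: fr_next => //; rewrite /= inordK // Heq2.
    have Hnn' : g (inord k) != None by apply: Hnn; rewrite /= inordK.
    have Hp : g (inord (val (inord k : 'I_N.+1)).-1) = Some true.
      by apply: fr_le => //; rewrite /= !inordK //; lia.
    rewrite /W Hp /= inordK //.
    have -> : (k == 0%N) = false by lia.
    case: (g (inord k)) Hn Hnn' => [[]|] //= _ _.
    by rewrite ?true1 ?false0 mulr1 mulr0 addr0.
- have -> : (k.-1 <= frontier g)%N = true by lia.
  rewrite true1 !mulr1 subrK.
  rewrite big1 // => i Hi; apply: W_one => //.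
  by rewrite -Heq.
Qed.


Definition Fr N t k := \sum_(h : config N) spread_dist a b t h * (k <= frontier h)%:R.

Lemma Fr_ge0 N t k : 0 <= Fr N t k.
Proof. by apply: sumr_ge0 => h _; apply: mulr_ge0; [apply: dist_ge0|apply: ler0n]. Qed.

Lemma Fr0 N t : Fr N t 0 = 1.
Proof. by rewrite /Fr -[RHS](dist_sum N t); apply: eq_bigr => h _; rewrite (natbT (leq0n _)) mulr1. Qed.

Lemma F_step N t k : (1 <= k)%N -> (k <= t)%N -> (k <= N)%N ->
  (1 - b) * Fr N t k + b * Fr N t k.-1 <= Fr N t.+1 k.
Proof.
move=> H1 Ht HN.
have -> : Fr N t.+1 k = \sum_(g : config N) spread_dist a b t g *
     \sum_h step_prob a b g h * (k <= frontier h)%:R.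
  rewrite /Fr /=; under eq_bigr do rewrite mulr_suml.
  rewrite exchange_big /=; apply: eq_bigr => g _.
  by rewrite mulr_sumr; apply: eq_bigr => h _; rewrite mulrA.
rewrite /Fr !mulr_sumr -big_split /=; apply: ler_sum => g _.
case: (eqVneq (spread_dist a b t g) 0) => [->|Hg].
  by rewrite !mul0r !mulr0 addr0.
rewrite mulrCA (mulrCA b) -mulrDr; apply: ler_wpM2l; first exact: dist_ge0.
exact: (key Hg H1 Ht HN).
Qed.

Definition w m i : R := 'C(m, i)%:R * b ^+ i * (1 - b) ^+ (m - i).

Lemma w_rec m i : w m.+1 i.+1 = (1 - b) * w m i.+1 + b * w m i.
Proof.
rewrite /w binS natrD.
case: (ltnP i m) => H.
  have -> : (m - i = (m - i.+1).+1)%N by lia.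
  rewrite subSS; have -> : (m - i = (m - i.+1).+1)%N by lia.
  rewrite !exprS; ring.
rewrite (bin_small (n := m) (m := i.+1)) ?ltnS // subSS. rewrite !exprS; ring.
Qed.

Lemma w_rec0 m : w m.+1 0 = (1 - b) * w m 0.
Proof. by rewrite /w !bin0 !subn0 exprS; ring. Qed.

Lemma w_out m i : (m < i)%N -> w m i = 0.
Proof. by move=> H; rewrite /w bin_small // mul0r mul0r. Qed.

Lemma wsum_rec m (f : nat -> R) :
  \sum_(i < m.+2) w m.+1 i * f i =
  (1 - b) * \sum_(i < m.+1) w m i * f i + b * \sum_(i < m.+1) w m i * f i.+1.
Proof.
have E1 : \sum_(i < m.+1) w m i * f i = w m 0 * f 0%N + \sum_(i < m.+1) w m i.+1 * f i.+1.
  rewrite big_ord_recl big_ord_recr /= (w_out (ltnSn m)) mul0r addr0; congr (_ + _).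
have E2 : \sum_(i < m.+1) w m.+1 (bump 0 i) * f (bump 0 i) =
   (1 - b) * \sum_(i < m.+1) w m i.+1 * f i.+1 + b * \sum_(i < m.+1) w m i * f i.+1.
  rewrite !mulr_sumr -big_split; apply: eq_bigr => i _.
  by rewrite (_ : bump 0 i = i.+1) // w_rec mulrDl !mulrA.
rewrite big_ord_recl E2 E1 w_rec0; ring.
Qed.



Lemma w_ge0 m i : 0 <= w m i.
Proof.
case/andP: Hb => b0 b1.
by rewrite /w !mulr_ge0 ?exprn_ge0 ?ler0n // subr_ge0.
Qed.

Definition Hbin m N k := \sum_(i < m.+1) w m i * (k <= minn i N)%:R.

Lemma wsum1 m : \sum_(i < m.+1) w m i = 1.
Proof.
elim: m => [|m IH]; first by rewrite big_ord1 /w bin0 !expr0 !mulr1.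
have E : forall n, \sum_(i < n.+1) w n i * 1 = \sum_(i < n.+1) w n i.
  by move=> n; apply: eq_bigr => i _; rewrite mulr1.
by rewrite -E (wsum_rec m (fun=> 1)) E IH !mulr1 subrK.
Qed.

Lemma Hbin0 m N : Hbin m N 0 = 1.
Proof.
by rewrite /Hbin -[RHS](wsum1 m); apply: eq_bigr => i _; rewrite (natbT (leq0n _)) mulr1.
Qed.

Lemma Hbin_zero m N k : (m < k)%N || (N < k)%N -> Hbin m N k = 0.
Proof.
move=> H; rewrite /Hbin big1 // => i _.
have := ltn_ord i; move=> Hi.
by rewrite natbF ?mulr0 //; lia.
Qed.

Lemma Hbin_step m N k : (1 <= k)%N ->
  Hbin m.+1 N k <= (1 - b) * Hbin m N k + b * Hbin m N k.-1.
Proof.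
move=> Hk; rewrite /Hbin (wsum_rec m (fun i => (k <= minn i N)%:R)) lerD2l.
case/andP: Hb => b0 b1.
apply: ler_wpM2l => //; apply: ler_sum => i _; apply: ler_wpM2l; first exact: w_ge0.
rewrite ler_nat; case E: (k <= minn i.+1 N)%N => //=.
by have -> : (k.-1 <= minn i N)%N by lia.
Qed.

Lemma dom s N k : Hbin s N k <= Fr N s.+1 k.
Proof.
case/andP: Hb => b0 b1.
have q0 : 0 <= 1 - b by rewrite subr_ge0.
elim: s k => [|s IH] k.
  case: k => [|k]; first by rewrite Hbin0 Fr0.
  by rewrite Hbin_zero ?Fr_ge0.
case: k => [|k]; first by rewrite Hbin0 Fr0.
case: (leqP k.+1 s.+1) => H1; last by rewrite Hbin_zero ?Fr_ge0 ?H1.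
case: (leqP k.+1 N) => H2; last by rewrite Hbin_zero ?Fr_ge0 ?H2 ?orbT.
apply: (le_trans (Hbin_step s N (ltn0Sn k))).
apply: (le_trans _ (F_step (ltn0Sn k) H1 H2)).
by apply: lerD; apply: ler_wpM2l => //; apply: IH.
Qed.


Lemma ceil_nat (x : R) : exists k : nat, forall j : nat, (x <= j%:R) = (k <= j)%N.
Proof.
case: (lerP x 0) => Hx.
  exists 0%N => j; rewrite leq0n; apply: (le_trans Hx); exact: ler0n.
exists `|Num.ceil x|%N => j.
have Hc : (0 <= Num.ceil x)%R by rewrite ceil_ge0 (lt_trans _ Hx) // ltrN10.
transitivity (Num.ceil x <= j%:Z)%R; first by rewrite ceil_le_int pmulrn.
by rewrite -{1}(gez0_abs Hc) lez_nat.
Qed.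

Lemma part1 n t x : (1 <= t)%N -> prob_minbin_ge b t.-1 n x <= prob_frontier_ge a b n t x.
Proof.
move=> Ht; have [k Hk] := ceil_nat x.
have -> : prob_frontier_ge a b n t x = Fr (trunc n t) t k.
  rewrite /prob_frontier_ge /Fr big_mkcond; apply: eq_bigr => h _.
  by rewrite Hk; case: (k <= _)%N; rewrite ?true1 ?false0 ?mulr1 ?mulr0.
have -> : prob_minbin_ge b t.-1 n x = Hbin t.-1 (trunc n t) k.
  rewrite /prob_minbin_ge /Hbin big_mkcond; apply: eq_bigr => i _.
  have -> : minninf i n = minn i (trunc n t).
    case: n => [m|] //=; have := ltn_ord i; move=> Hi; lia.
  by rewrite Hk; case: (k <= _)%N; rewrite ?true1 ?false0 ?mulr1 ?mulr0.
by have := dom t.-1 (trunc n t) k; rewrite prednK.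
Qed.


Lemma geom m (e : R) : \sum_(i < m.+1) w m i * e ^+ i = (1 - b + b * e) ^+ m.
Proof.
elim: m => [|m IH]; first by rewrite big_ord1 /w bin0 !expr0 !mulr1.
rewrite (wsum_rec m (fun i => e ^+ i)) /=.
have -> : \sum_(i < m.+1) w m i * e ^+ i.+1 = e * \sum_(i < m.+1) w m i * e ^+ i.
  by rewrite mulr_sumr; apply: eq_bigr => i _; rewrite exprS mulrCA.
by rewrite IH exprS; ring.
Qed.

Lemma chernoff m (z lam : R) : 0 <= lam ->
  \sum_(i < m.+1 | ~~ (z <= i%:R)) w m i <=
  expR (lam * z) * (1 - b + b * expR (- lam)) ^+ m.
Proof.
move=> Hl; rewrite -geom mulr_sumr.
apply: (@le_trans _ _ (\sum_(i < m.+1) w m i * expR (lam * (z - i%:R)))).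
  rewrite big_mkcond /=; apply: ler_sum => i _; case: ifP => H.
    rewrite -{1}(mulr1 (w m i)); apply: ler_wpM2l; first exact: w_ge0.
    apply: le_trans (expR_ge1Dx _); rewrite lerDl mulr_ge0 // subr_ge0.
    by rewrite ltW // ltNge.
  by rewrite mulr_ge0 ?expR_ge0 ?w_ge0.
rewrite le_eqVlt; apply/orP; left; apply/eqP; apply: eq_bigr => i _.
rewrite mulrBr expRD -mulrN -expRM_natr mulrN.
by rewrite mulNr mulrCA.
Qed.

Lemma base_le (lam : R) : 0 <= lam ->
  1 - b + b * expR (- lam) <= expR (b * (lam ^+ 2 - lam)).
Proof.
move=> Hl; case/andP: Hb => b0 b1.
have He0 := expR_ge0 (- lam).
have He : expR (- lam) * (1 + lam) <= 1.
  apply: (le_trans (ler_wpM2l He0 (expR_ge1Dx lam))).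
  by rewrite -expRD addNr expR0.
have Hl3 : 0 <= lam ^+ 3 by rewrite exprn_ge0.
have H3 : expR (- lam) * (1 + lam) <= (1 - lam + lam ^+ 2) * (1 + lam).
  have -> : (1 - lam + lam ^+ 2) * (1 + lam) = 1 + lam ^+ 3 by ring.
  by apply: (le_trans He); rewrite lerDl.
have He2 : expR (- lam) <= 1 - lam + lam ^+ 2.
  have Hp : 0 < 1 + lam by lra. by move: H3; rewrite ler_pM2r.
apply: le_trans (expR_ge1Dx _); nra.
Qed.


Lemma part2 n t : (0 < a < 1) -> (0 < b < 1) -> (1 <= t)%N ->
  1 - expR (- (1 * (t%:R `^ (2^-1)))) <=
  prob_frontier_ge a b n t (minrinf (b * t%:R - 3 * (t%:R `^ (1 - 4^-1))) n).
Proof.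
move=> _ Hb' Ht.
case/andP: Hb => b0 b1.
set T : R := t%:R.
have T1 : 1 <= T by rewrite /T ler1n.
have T0 : 0 <= T by lra.
set u := T `^ 4^-1.
have u0 : 0 <= u by apply: powR_ge0.
have Hu4 : u ^+ 4 = T.
  by rewrite -powR_mulrn // -powRrM mulVf ?powRr1 // pnatr_eq0.
have Hu2 : T `^ 2^-1 = u ^+ 2.
  by rewrite -powR_mulrn // -powRrM; congr (T `^ _); field.
have Hu3 : T `^ (1 - 4^-1) = u ^+ 3.
  by rewrite -powR_mulrn // -powRrM; congr (T `^ _); field.
have u1 : 1 <= u by rewrite -(expr_ge1 (n := 4)) // Hu4.
have un0 : u != 0 by apply/negP => /eqP E; move: u1; rewrite E; lra.
rewrite Hu2 Hu3 mul1r.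
set z := b * T - 3 * u ^+ 3.
have Hm : (t.-1)%:R = T - 1 :> R.
  by rewrite /T -{2}(prednK Ht) mulrSr addrK.
set m := t.-1.
apply: le_trans (part1 n _ Ht).
apply: (@le_trans _ _ (\sum_(i < m.+1 | z <= i%:R) w m i)); last first.
  rewrite /prob_minbin_ge -/m big_mkcond [X in _ <= X]big_mkcond /=.
  apply: ler_sum => i _; case: ifP => Hz; last by case: ifP => _; rewrite ?w_ge0.
  rewrite ifT // /minrinf; case: n => [N|] //=.
  case: (leqP i N) => HiN.
    by rewrite ge_min Hz.
  by rewrite ge_min lexx orbT.
have Hs := wsum1 m.
rewrite (bigID (fun i : 'I_m.+1 => z <= i%:R)) /= in Hs.
have v0 : 0 <= u^-1 by rewrite invr_ge0.
have Hc := chernoff m z v0.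
have Hexp : expR (u^-1 * z) * (1 - b + b * expR (- u^-1)) ^+ m <= expR (- u ^+ 2).
  apply: (@le_trans _ _ (expR (u^-1 * z) * expR (b * (u^-1 ^+ 2 - u^-1)) ^+ m)).
    apply: ler_wpM2l; first exact: expR_ge0.
    apply: lerXn2r; rewrite ?nnegrE ?expR_ge0 ?base_le //.
    have := mulr_ge0 b0 (expR_ge0 (- u^-1)); lra.
  rewrite -expRM_natl -expRD ler_expR Hm.
  set v := u^-1.
  have E : v * z + (T - 1) * (b * (v ^+ 2 - v)) = -3 * u^+2 + b * u^+2 - b * v^+2 + b * v.
    by rewrite /z -Hu4 /v; field.
  rewrite E.
  have v1 : v <= 1 by rewrite /v invf_le1 // (lt_le_trans ltr01 u1).
  have h1 : b * u ^+ 2 <= u ^+ 2 by rewrite ler_piMl // exprn_ge0.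
  have h2 : b * v <= 1 by nra.
  have h3 : 0 <= b * v ^+ 2 by rewrite mulr_ge0 // exprn_ge0.
  have h4 : 1 <= u ^+ 2 by rewrite exprn_ege1.
  lra.
have := le_trans Hc Hexp; lra.
Qed.

End S.

Theorem mainTheorem1 (R : realType) (a b : R) :
  0 < a < 1 -> 0 < b < 1 ->
  (forall (n : natinf) (t : nat) (x : R), (1 <= t)%N ->
     prob_minbin_ge b t.-1 n x <= prob_frontier_ge a b n t x)
  /\
  (exists K c1 c2 c3 : R, [/\ 0 < K, 0 < c1, 0 < c2 & 0 < c3] /\
     forall (n : natinf) (t : nat), (1 <= t)%N ->
       1 - expR (- (c1 * (t%:R `^ c2))) <=
       prob_frontier_ge a b n t
         (minrinf (b * t%:R - K * (t%:R `^ (1 - c3))) n)).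
Proof.
move=> Ha' Hb'.
have Ha : 0 <= a <= 1 by case/andP: Ha' => a0 a1; rewrite (ltW a0) (ltW a1).
have Hb : 0 <= b <= 1 by case/andP: Hb' => b0 b1; rewrite (ltW b0) (ltW b1).
split.
  by move=> n t x Ht; apply: part1.
exists 3, 1, 2^-1, 4^-1; split.
  by split; rewrite ?invr_gt0 ?ltr0n ?ltr01.
by move=> n t Ht; apply: part2.
Qed.
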